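(* For any good configuration $F$, $\Pr(\mathcal P_S \text{ belongs to } F)=e^{-(\theta_F+o(1))k}$ as $k\to\infty$, where $\theta_F$ is a constant depending on $F$ (and not on $k$).
   Context: Fix $0<\varepsilon<\frac12$, a constant $M\ge 40$, and an integer $N$ divisible by $21$, sufficiently large in terms of $\varepsilon$ and $M$; let $k\to\infty$. Let $S=[-\frac12M\sqrt k,\frac12M\sqrt k]^2$, tiled by $(MN)^2$ small squares of side $\ell=\sqrt k/N$ (indexed in a fixed $k$-independent way), and let $\mathcal P_S$ be a Poisson process of intensity one in $S$. For a small square $S_i$ containing $r$ points, set $d(S_i)=0$ if $r=0$, $d(S_i)=\lceil N^3r/k\rceil/N$ if $1\le r\le k$, and $d(S_i)=\infty$ if $r>k$. A configuration $F$ is an assignment of a label in $\{0,\infty\}\cup\{j/N:1\le j\le N^3\}$ to each small square; a point set belongs to $F$ if its values $d(S_i)$ equal these labels. Let $\Sigma$ be the set of circles whose centres are centres of small squares and which pass through the centre of at least one other small square; for $\Gamma\in\Sigma$ let $R_\Gamma$ be the set of small squares lying entirely within distance $\frac52\ell\sqrt2$ of $\Gamma$. $F$ is of Type A if some label exceeds $N^2/21$; of Type B if for some $\Gamma\in\Sigma$, $\frac{k}{N^2}\sum_{S_i\in R_\Gamma}d(S_i)\ge\frac{\varepsilon k}{2}$. $F$ is good if it is of neither type. *)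

(* Defs.v *)
From mathcomp Require Import all_boot all_order all_algebra.
From mathcomp Require Import all_classical all_reals all_analysis.
Set Implicit Arguments. Unset Strict Implicit. Unset Printing Implicit Defensive.
Import Order.TTheory GRing.Theory Num.Theory.
Local Open Scope ring_scope.

(* Small squares: the square (a,b) (a,b < n, where n = M*N squares per side).
   Labels: [None] = infinity, [Some j] = j/N (so [Some 0] is the label 0;
   valid labels are j <= N^3). *)
Definition square (n : nat) := ('I_n * 'I_n)%type.
Definition config (n : nat) := {ffun square n -> option nat}.

Definition valid_config (N n : nat) (F : config n) : Prop :=
  forall i j, F i = Some j -> (j <= N ^ 3)%N.

(* d(S_i) as a function of the number r of points in S_i:
   0 if r = 0, ceil(N^3 r / k)/N if 1 <= r <= k, infinity if r > k.
   For 1 <= r <= k (so k >= 1), ceil(N^3 r/k) = (N^3 r + k - 1) %/ k. *)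
Definition dlabel (N k r : nat) : option nat :=
  if r == 0%N then Some 0%N
  else if (r <= k)%N then Some ((N ^ 3 * r + k - 1) %/ k)%N
  else None.

Section Geometry.
Context {R : realType}.

(* Geometry in units of the small-square side ell = sqrt k / N (all the
   geometric conditions below are invariant under translation and scaling,
   since the threshold 5/2 * ell * sqrt 2 also scales with ell). *)
Definition cx n (i : square n) : R := (i.1 : nat)%:R + 2^-1.
Definition cy n (i : square n) : R := (i.2 : nat)%:R + 2^-1.

Definition dist2 (x1 y1 x2 y2 : R) : R := Num.sqrt ((x1 - x2) ^+ 2 + (y1 - y2) ^+ 2).

(* A circle Gamma in Sigma is given by a pair (c, c') of distinct small squares:
   centre = centre of c, radius = distance from centre of c to centre of c'. *)
Definition in_R_Gamma n (c c' : square n) (i : square n) : Prop :=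
  let r := dist2 (cx c) (cy c) (cx c') (cy c') in
  forall x y : R,
    (i.1 : nat)%:R <= x <= (i.1 : nat)%:R + 1 ->
    (i.2 : nat)%:R <= y <= (i.2 : nat)%:R + 1 ->
    `| dist2 x y (cx c) (cy c) - r | <= 5 / 2 * Num.sqrt 2.

Definition labval (N : nat) (l : option nat) : \bar R :=
  match l with None => +oo%E | Some j => (j%:R / N%:R)%:E end.

Definition typeA (N n : nat) (F : config n) : Prop :=
  exists i, ((N%:R ^+ 2 / 21)%:E < labval N (F i))%E.

(* (k/N^2) * sum d >= eps k / 2  <=>  sum d >= eps N^2 / 2  (k > 0). *)
Definition typeB (eps : R) (N n : nat) (F : config n) : Prop :=
  exists c c' : square n, c != c' /\
    ((eps * N%:R ^+ 2 / 2)%:E <=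
       \sum_(i | `[< in_R_Gamma c c' i >]) labval N (F i))%E.

Definition good (eps : R) (N n : nat) (F : config n) : Prop :=
  ~ typeA N F /\ ~ typeB eps N F.

Definition poisson_mass (lam : R) (r : nat) : R :=
  expR (- lam) * lam ^+ r / (r`!)%:R.

(* Pr(P_S belongs to F): the counts in the (MN)^2 disjoint small squares
   of area ell^2 = k/N^2 are independent Poisson(k/N^2). *)
Definition prob_config (N k n : nat) (F : config n) : R :=
  \prod_(i : square n)
    limn (fun m : nat => \sum_(0 <= r < m)
       (if dlabel N k r == F i then poisson_mass (k%:R / N%:R ^+ 2) r else 0)).

End Geometry.

(* Main.v *)
Require Import Defs.
From mathcomp Require Import all_boot all_order all_algebra.
From mathcomp Require Import all_classical all_reals all_analysis.
From mathcomp Require Import ring lra zify.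
Import Order.TTheory GRing.Theory Num.Theory.
Local Open Scope ring_scope.
Section Fekete.
Variable R : realType.

Lemma supermul_iter (P : nat -> R) m s q :
  (forall k, 0 <= P k) ->
  (forall k1 k2, P k1 * P k2 <= P (k1 + k2)%N) ->
  P m ^+ q * P s <= P (q * m + s)%N.
Proof.
move=> P0 Pm; elim: q => [|q IH]; first by rewrite expr0 mul1r mul0n add0n.
rewrite exprS -mulrA mulSn -addnA (le_trans _ (Pm _ _))//.
by rewrite ler_wpM2l.
Qed.

Lemma prod_le1_ge (P : nat -> R) (k0 m s : nat) :
  (forall k, 0 <= P k <= 1) -> (k0 <= s < k0 + m)%N ->
  \prod_(t < k0 + m | (k0 <= t)%N) P t <= P s.
Proof.
move=> P01 /andP[h1 h2].
rewrite (bigD1 (Ordinal h2)) //=.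
have: 0 <= \prod_(i < k0 + m | (k0 <= i)%N && (i != Ordinal h2)) P i <= 1.
  apply: (big_ind (fun x : R => 0 <= x <= 1)) => //.
  - by rewrite ler01 lexx.
  - move=> x y /andP[x0 x1] /andP[y0 y1]; rewrite mulr_ge0//.
    by rewrite mulr_ile1.
move=> /andP[a0 a1]; have := P01 s => /andP[p0 p1].
by rewrite -[leRHS]mulr1 ler_wpM2l.
Qed.

Lemma fekete (P : nat -> R) (k0 : nat) :
  (forall k, 0 <= P k <= 1) ->
  (forall k1 k2, P k1 * P k2 <= P (k1 + k2)%N) ->
  (forall k, (k0 <= k)%N -> 0 < P k) -> (0 < k0)%N ->
  exists theta : R, forall eta : R, 0 < eta -> exists K : nat, forall k : nat, (K <= k)%N ->
    expR (- (theta + eta) * k%:R) <= P k <= expR (- (theta - eta) * k%:R).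
Proof.
move=> P01 Psm Ppos k0pos.
have P0 k : 0 <= P k by case/andP: (P01 k).
pose E := [set x : R | exists2 k, (k0 <= k)%N & x = ln (P k) / k%:R]%classic.
have Eub : ubound E 0.
  move=> x [k kk ->]; rewrite mulr_le0_ge0 ?invr_ge0 ?ler0n//.
  by apply: ln_le0; case/andP: (P01 k).
have hs : has_sup E.
  split; last by exists 0.
  by exists (ln (P k0) / k0%:R), k0.
pose L := sup E.
have L0 : L <= 0 by apply: ge_sup => //; case: hs.
exists (- L) => eta eta0.
have [e [m mk0 ->] He] := sup_adherent (divr_gt0 eta0 (ltr0n _ 2)) hs.
have m0 : (0 < m)%N by apply: leq_trans mk0.
pose C := \prod_(t < k0 + m | (k0 <= t)%N) P t.
have C0 : 0 < C by apply: prodr_gt0 => t /Ppos.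
pose K := (k0 + m + (Num.truncn (- ln C * 2 / eta)).+1)%N.
exists K => k Kk.
have kk0 : (k0 <= k)%N by apply: leq_trans Kk; rewrite /K -addnA leq_addr.
have k0' : 0 < k%:R :> R by rewrite ltr0n (leq_trans k0pos).
apply/andP; split; last first.
  have : ln (P k) / k%:R <= L by apply: sup_upper_bound => //; exists k.
  rewrite ler_pdivrMr // => hk.
  rewrite -[P k]lnK; last by rewrite posrE Ppos.
  rewrite ler_expR; nra.
pose q := ((k - k0) %/ m)%N; pose s := (k0 + (k - k0) %% m)%N.
have ks : k = (q * m + s)%N.
  by rewrite /q /s addnCA -divn_eq subnKC.
have hs' : (k0 <= s < k0 + m)%N by rewrite leq_addr ltn_add2l ltn_mod.
have := supermul_iter P m s q P0 Psm; rewrite -ks => hPk.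
apply: le_trans hPk.
have Pm0 : 0 < P m := Ppos m mk0.
have hPm : expR ((L - eta / 2) * m%:R) <= P m.
  rewrite -[P m]lnK ?posrE // ler_expR.
  by move: He; rewrite -/L ltr_pdivlMr ?ltr0n //; lra.
have hmq : ((q * m)%:R <= k%:R :> R) by rewrite ler_nat ks leq_addr.
have hC : expR (- (eta / 2) * k%:R) <= C.
  rewrite -[C]lnK ?posrE // ler_expR.
  have := truncnS_gt (- ln C * 2 / eta).
  have : ((Num.truncn (- ln C * 2 / eta)).+1%:R <= k%:R :> R).
    by rewrite ler_nat (leq_trans _ Kk)// leq_addl.
  move=> h1 h2; have h3 : - ln C * 2 / eta < k%:R by lra.
  move: h3; rewrite ltr_pdivrMr //; lra.
have hPs := @prod_le1_ge P k0 m s P01 hs'.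
have e1 : expR (- (- L + eta) * k%:R) = expR ((L - eta / 2) * k%:R) * expR (- (eta / 2) * k%:R).
  by rewrite -expRD; congr expR; lra.
rewrite e1 ler_pM ?expR_ge0 //; last by apply: le_trans hPs.
apply: (@le_trans _ _ (expR ((L - eta / 2) * m%:R) ^+ q)).
  rewrite -expRM_natr ler_expR -mulrA -natrM mulnC.
  apply: ler_wnM2l => //; lra.
by rewrite lerXn2r // ?nnegrE ?expR_ge0.
Qed.
End Fekete.

Lemma divn_eqP (x k j : nat) : (0 < k)%N ->
  (x %/ k == j)%N = ((j * k <= x) && (x < j.+1 * k))%N.
Proof.
move=> k0; rewrite eqn_leq leq_divRL // -ltnS ltn_divLR //.
by rewrite andbC.
Qed.

Lemma dlabel_Some N k r j : (0 < N)%N -> (j <= N ^ 3)%N ->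
  (dlabel N k r == Some j) =
  (if j == 0%N then r == 0%N else ((j.-1 * k < N ^ 3 * r) && (N ^ 3 * r <= j * k)))%N.
Proof.
move=> N0 jN; rewrite /dlabel.
have N3 : (0 < N ^ 3)%N by rewrite expn_gt0 N0.
case: (r =P 0%N) => [->|/eqP r0] /=.
  case: j jN => [|j] //= _; rewrite muln0 ltn0 //.
case: (leqP r k) => rk; last first.
  case: (j =P 0%N) => [->|/eqP j0] //; apply/esym/negbTE/andP => -[h1 h2].
  move: N3 jN h1 h2; set M := (N ^ 3)%N => N3 jN h1 h2; nia.
have k0 : (0 < k)%N by case: r r0 rk => [|r] //= _ /(leq_trans _); apply.
rewrite /eq_op /= divn_eqP //.
case: (j =P 0%N) => [->|/eqP j0].
  rewrite mul0n leq0n /= mul1n; apply/negbTE; rewrite -leqNgt.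
  move: N3 jN; set M := (N ^ 3)%N => N3 jN; nia.
case: j j0 jN => [|j] // _ jN /=.
move: N3 jN; set M := (N ^ 3)%N => N3 jN.
apply/andP/andP => [] [h1 h2]; split; nia.
Qed.
Section Poisson.
Variable R : realType.

Lemma pm_ge0 (l : R) r : 0 <= l -> 0 <= poisson_mass l r.
Proof. by move=> l0; rewrite /poisson_mass divr_ge0 ?mulr_ge0 ?expR_ge0 ?exprn_ge0. Qed.

Lemma pm_gt0 (l : R) r : 0 < l -> 0 < poisson_mass l r.
Proof. by move=> l0; rewrite /poisson_mass divr_gt0 ?mulr_gt0 ?expR_gt0 ?exprn_gt0 ?ltr0n ?fact_gt0. Qed.

Lemma pm_sum_le1 (l : R) n : 0 <= l -> \sum_(0 <= r < n) poisson_mass l r <= 1.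
Proof.
move=> l0.
have h : \sum_(0 <= r < n) exp_coeff l r <= expR l.
  have := @nondecreasing_cvgn_le _ (series (exp_coeff l)).
  apply => //; last exact: is_cvg_series_exp_coeff.
  by apply: nondecreasing_series => m _ _; apply: exp_coeff_ge0.
rewrite (eq_bigr (fun r => expR (- l) * exp_coeff l r)); last first.
  by move=> r _; rewrite /poisson_mass /exp_coeff /= mulrA.
rewrite -mulr_sumr expRN ler_pdivrMl ?expR_gt0 // mulr1.
exact: h.
Qed.

Lemma pm_conv (a b : R) r :
  poisson_mass (a + b) r = \sum_(i < r.+1) poisson_mass a i * poisson_mass b (r - i).
Proof.
rewrite /poisson_mass addrC exprDn mulr_sumr mulr_suml; apply: eq_bigr => i _.
have ir : (i <= r)%N by rewrite -ltnS.
have hf := bin_fact ir.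
rewrite -hf !natrM mulr_natr -[_ *+ _]mulr_natr opprD expRD.
have f1 : (i`!%:R : R) != 0 by rewrite pnatr_eq0 -lt0n fact_gt0.
have f2 : ((r - i)`!%:R : R) != 0 by rewrite pnatr_eq0 -lt0n fact_gt0.
have f3 : ('C(r, i)%:R : R) != 0 by rewrite pnatr_eq0 -lt0n bin_gt0.
field.
by rewrite f1 f2 f3.
Qed.
End Poisson.
Section Gsq.
Variable R : realType.
Variables (N j : nat).
Hypothesis N0 : (0 < N)%N.
Hypothesis jN : (j <= N ^ 3)%N.

Definition lamk (k : nat) : R := k%:R / N%:R ^+ 2.

Definition gsq (k : nat) : R :=
  \sum_(0 <= r < k.+1) (if dlabel N k r == Some j then poisson_mass (lamk k) r else 0).

Lemma lamk_ge0 k : 0 <= lamk k.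
Proof. by rewrite /lamk divr_ge0 ?exprn_ge0. Qed.

Lemma lamkD k1 k2 : lamk (k1 + k2)%N = lamk k1 + lamk k2.
Proof. by rewrite /lamk natrD mulrDl. Qed.

Lemma dlabel_big k r : (k < r)%N -> dlabel N k r = None.
Proof.
move=> kr; rewrite /dlabel; case: (r =P 0%N) => [r0|_]; first by rewrite r0 in kr.
by rewrite leqNgt kr.
Qed.

Lemma dlabel_le k r : dlabel N k r == Some j -> (r <= k)%N.
Proof. by case: (leqP r k) => // /dlabel_big ->. Qed.

Lemma gsq_widen k n : (k < n)%N ->
  \sum_(0 <= r < n) (if dlabel N k r == Some j then poisson_mass (lamk k) r else 0)
  = gsq k.
Proof.
move=> kn; rewrite (big_cat_nat _ (n := k.+1)) //= [X in _ + X]big_nat_cond [X in _ + X]big1 ?addr0 //.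
by move=> r /andP[/andP[kr _] _]; rewrite dlabel_big.
Qed.

Lemma gsq_ge0 k : 0 <= gsq k.
Proof.
by apply: sumr_ge0 => r _; case: ifP => // _; apply: pm_ge0; apply: lamk_ge0.
Qed.

Lemma gsq_le1 k : gsq k <= 1.
Proof.
apply: le_trans (@pm_sum_le1 R (lamk k) k.+1 (lamk_ge0 k)) => /=.
apply: ler_sum => r _; case: ifP => // _; apply: pm_ge0; apply: lamk_ge0.
Qed.

Lemma dlabel_add k1 k2 r1 r2 : dlabel N k1 r1 == Some j -> dlabel N k2 r2 == Some j ->
  dlabel N (k1 + k2)%N (r1 + r2)%N == Some j.
Proof.
rewrite !dlabel_Some //; case: (j =P 0%N) => [_|/eqP j0].
  by move=> /eqP -> /eqP ->.
move: jN; set M := (N ^ 3)%N => jM /andP[h1 h2] /andP[h3 h4].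
apply/andP; split; nia.
Qed.

Lemma gsq_pos k : (N ^ 3 <= k)%N -> 0 < gsq k.
Proof.
move=> Nk.
have k0 : (0 < k)%N by apply: leq_trans Nk; rewrite expn_gt0 N0.
have lam0 : 0 < lamk k by rewrite /lamk divr_gt0 ?ltr0n ?exprn_gt0 ?ltr0n.
have [r [rk hr]] : exists r, (r < k.+1)%N /\ dlabel N k r == Some j.
  case: (j =P 0%N) => [j0|/eqP j0].
    by exists 0%N; rewrite dlabel_Some // j0.
  exists (j * k %/ N ^ 3)%N.
  have N3 : (0 < N ^ 3)%N by rewrite expn_gt0 N0.
  have e1 := leq_divM (j * k) (N ^ 3).
  have e2 := ltn_ceil (j * k) N3.
  move: e1 e2; rewrite dlabel_Some // (negbTE j0).
  move: N3 jN Nk; set M := (N ^ 3)%N; set r := (j * k %/ M)%N => N3 jM Nk e1 e2.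
  split; first nia.
  apply/andP; split; nia.
rewrite /gsq big_mkord (bigD1 (Ordinal rk)) //= hr.
apply: (@lt_le_trans _ _ (poisson_mass (lamk k) r)); first exact: pm_gt0.
rewrite lerDl; apply: sumr_ge0 => i _; case: ifP => // _; apply: pm_ge0; apply: lamk_ge0.
Qed.

Lemma gsq_supermul k1 k2 : gsq k1 * gsq k2 <= gsq (k1 + k2)%N.
Proof.
set B := (k1 + k2).+1.
have hB1 : (k1 < B)%N by rewrite ltnS leq_addr.
have hB2 : (k2 < B)%N by rewrite ltnS leq_addl.
rewrite -(@gsq_widen k1 B hB1) -(@gsq_widen k2 B hB2).
rewrite mulr_suml.
set G := fun r i => (if dlabel N (k1 + k2)%N r == Some j then
   poisson_mass (lamk k1) i * poisson_mass (lamk k2) (r - i)%N else 0).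
have G0 r i : 0 <= G r i.
  by rewrite /G; case: ifP => // _; rewrite mulr_ge0 // pm_ge0 // lamk_ge0.
have -> : gsq (k1 + k2)%N = \sum_(0 <= i < B) \sum_(0 <= r < B) (if (i <= r)%N then G r i else 0).
  rewrite /gsq exchange_big_nat; apply: eq_big_nat => r /andP[_ rB].
  rewrite (big_cat_nat _ (n := r.+1)) //=.
  rewrite [X in _ + X]big_nat_cond [X in _ + X]big1 ?addr0; last first.
    by move=> i /andP[/andP[ri _] _]; rewrite leqNgt ri.
  rewrite big_nat_cond.
  rewrite (eq_bigr (fun i => G r i)); last by move=> i /andP[/andP[_ ir] _]; rewrite -ltnS ir.
  rewrite -big_nat_cond /G; case: ifP => _; last by rewrite big1.
  by rewrite lamkD pm_conv big_mkord.
apply: ler_sum_nat => i /andP[_ iB].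
rewrite mulr_sumr.
set G' := fun r => if (i <= r)%N then G r i else 0.
have G'0 r : 0 <= G' r by rewrite /G'; case: ifP.
apply: (@le_trans _ _ (\sum_(0 <= r2 < B) G' (r2 + i)%N)).
  apply: ler_sum_nat => r2 _.
  rewrite /G' /G leq_addl.
  case: ifP => h1; last by rewrite mul0r; case: ifP => // _; rewrite mulr_ge0 // pm_ge0 // lamk_ge0.
  case: ifP => h2; last by rewrite mulr0; case: ifP => // _; rewrite mulr_ge0 // pm_ge0 // lamk_ge0.
  by rewrite addnC dlabel_add // addnK.
have -> : \sum_(0%N <= r2 < B) G' (r2 + i)%N = \sum_((0 + i)%N <= r < (B + i)%N) G' r.
  by rewrite big_addn addnK.
apply: (@le_trans _ _ (\sum_(0%N <= r < (B + i)%N) G' r)).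
  rewrite [leRHS](big_cat_nat _ (n := i)) //= ?leq_addl // add0n.
  by rewrite lerDr; apply: sumr_ge0 => r _.
rewrite (big_cat_nat _ (n := B)) //= ?leq_addr //.
rewrite [X in _ + X]big_nat_cond [X in _ + X]big1 ?addr0 //.
move=> r /andP[/andP[Br _] _]; rewrite /G' /G.
by rewrite dlabel_big //; case: ifP.
Qed.

End Gsq.
Lemma limn_gsq (R : realType) N j k :
  limn (fun m : nat => \sum_(0 <= r < m)
     (if dlabel N k r == Some j then poisson_mass (k%:R / N%:R ^+ 2 : R) r else 0))
  = gsq R N j k.
Proof.
apply: (@lim_near_cst R^o) => //; near=> m; apply: gsq_widen.
by near: m; apply: nbhs_infty_gt.
Unshelve. all: by end_near.
Qed.

Theorem lemma10 (R : realType) (eps M : R) :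
  0 < eps < 2^-1 -> 40 <= M ->
  exists N0 : nat, forall N n : nat, (N0 <= N)%N -> (21 %| N)%N ->
    n%:R = M * N%:R ->
    forall F : config n, valid_config N F -> good eps N F ->
    exists theta : R, forall eta : R, 0 < eta ->
      exists K : nat, forall k : nat, (K <= k)%N ->
        expR (- (theta + eta) * k%:R) <= prob_config N k F <=
        expR (- (theta - eta) * k%:R).
Proof.
move=> _ _; exists 1%N => N n N0 _ _ F vF [nA _].
pose jf i := odflt 0%N (F i).
have Fj i : F i = Some (jf i).
  rewrite /jf; case E: (F i) => [a|] //; exfalso; apply: nA; exists i.
  by rewrite E /= ltry.
have jN i : (jf i <= N ^ 3)%N by apply: (vF i); rewrite -Fj.
pose P k := \prod_(i : square n) gsq R N (jf i) k.
have eP : forall k, prob_config N k F = P k.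
  by move=> k; apply: eq_bigr => i _; rewrite Fj; apply: limn_gsq.
apply: (@fekete R (fun k => prob_config N k F) (N ^ 3)).
- move=> k; rewrite eP.
  apply: (big_ind (fun x : R => 0 <= x <= 1)) => //.
  + by rewrite ler01 lexx.
  + move=> x y /andP[x0 x1] /andP[y0 y1]; rewrite mulr_ge0//.
    by rewrite mulr_ile1.
  + by move=> i _; rewrite gsq_ge0 gsq_le1.
- move=> k1 k2; rewrite !eP /P -big_split /=; apply: ler_prod => i _.
  by rewrite mulr_ge0 ?gsq_ge0 //= gsq_supermul.
- by move=> k Nk; rewrite eP; apply: prodr_gt0 => i _; apply: gsq_pos.
- by rewrite expn_gt0 N0.
Qed.
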